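(* Let $\Sigma:\ \dot x=-ZB\mathcal{K}(x^* )B^T\mathrm{Exp}\big(Z^T\mathrm{Ln}(\tfrac{x}{x^*})\big)$ be a balanced mass action chemical reaction network with thermodynamic equilibrium $x^*\in\mathbb{R}^m_+$, and let $\hat\Sigma:\ \dot x=-\hat Z\hat B\hat{\mathcal{K}}(x^* )\hat B^T\mathrm{Exp}\big(\hat Z^T\mathrm{Ln}(\tfrac{x}{x^*})\big)$ be its reduced-order model obtained by deleting a subset $\mathcal{V}_r$ of complexes (as described in the context). Denote by $\mathcal{E}$ and $\hat{\mathcal{E}}$ the sets of equilibria (points $x\in\mathbb{R}^m_+$ where the right-hand side vanishes) of $\Sigma$ and $\hat\Sigma$, respectively. Then $\mathcal{E}\subset\hat{\mathcal{E}}$. Furthermore, if $\Sigma$ has deficiency zero then so does $\hat\Sigma$.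
   Context: Network $\Sigma$: $m$ species with concentrations $x\in\mathbb{R}^m_+$, $c$ complexes, $r$ reactions. $Z$ ($m\times c$) has as $\rho$-th column the species composition of complex $\rho$. The complex graph has the complexes as vertices and for each reaction $j$ an edge from its substrate complex $\mathcal{S}_j$ to its product complex $\mathcal{P}_j$; $B$ is its $c\times r$ incidence matrix ($-1$ at tail, $+1$ at head). Mass action rates $v_j(x)=k_j^{\mathrm{forw}}\exp(Z_{\mathcal{S}_j}^T\mathrm{Ln}(x))-k_j^{\mathrm{rev}}\exp(Z_{\mathcal{P}_j}^T\mathrm{Ln}(x))$; $x^*$ with $v(x^* )=0$ is a thermodynamic equilibrium; balanced reaction constants $\kappa_j(x^* )=k_j^{\mathrm{forw}}\exp(Z_{\mathcal{S}_j}^T\mathrm{Ln}(x^* ))>0$, $\mathcal{K}(x^* )=\mathrm{diag}(\kappa_j(x^* ))$, so that $ZBv(x)=-ZB\mathcal{K}(x^* )B^T\mathrm{Exp}(Z^T\mathrm{Ln}(x/x^* ))$. Reduction: let $L:=B\mathcal{K}(x^* )B^T$ (a symmetric weighted Laplacian of the complex graph). Choose a subset $\mathcal{V}_r$ of complexes to delete and, after permuting the complexes so that $\mathcal{V}_r$ comes last, partition $L=\begin{bmatrix}L_{11}&L_{12}\\L_{21}&L_{22}\end{bmatrix}$ and $Z=\begin{bmatrix}Z_1&Z_2\end{bmatrix}$ accordingly, with $L_{22}$ invertible. The Schur complement $\hat L:=L_{11}-L_{12}L_{22}^{-1}L_{21}$ is the weighted Laplacian $\hat B\hat{\mathcal{K}}(x^*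 )\hat B^T$ of a directed graph on the remaining complexes, with incidence matrix $\hat B$ and positive diagonal weight matrix $\hat{\mathcal{K}}(x^* )$; set $\hat Z:=Z_1$. The deficiency of a network with complex stoichiometric matrix $Z$ and incidence matrix $B$ is $\operatorname{rank}B-\operatorname{rank}ZB$; deficiency zero means this equals $0$ (equivalently $\ker Z\cap\operatorname{im}B=0$). $\mathrm{Ln},\mathrm{Exp}$ are componentwise logarithm/exponential, $x/x^*$ the componentwise quotient. *)

(* Defs.v *)
From HB Require Import structures.
From mathcomp Require Import all_boot all_order all_algebra.
From mathcomp Require Import reals sequences exp.
Set Implicit Arguments. Unset Strict Implicit. Unset Printing Implicit Defensive.
Import Order.TTheory GRing.Theory Num.Theory.
Local Open Scope ring_scope.

Section CRN.
Variable R : realType.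

Definition is_incidence (c r : nat) (B : 'M[R]_(c, r)) : Prop :=
  forall j : 'I_r, exists s t : 'I_c,
    s != t /\ B s j = -1 /\ B t j = 1 /\
    (forall i : 'I_c, i != s -> i != t -> B i j = 0).

Definition is_complex_matrix (m c : nat) (Z : 'M[R]_(m, c)) : Prop :=
  forall i j, exists n : nat, Z i j = n%:R.

Definition wlaplacian (c r : nat) (B : 'M[R]_(c, r)) (k : 'rV[R]_r) : 'M[R]_c :=
  B *m diag_mx k *m B^T.

Definition Expv (n : nat) (v : 'cV[R]_n) : 'cV[R]_n := \col_i expR (v i 0).
Definition Lnv (n : nat) (v : 'cV[R]_n) : 'cV[R]_n := \col_i ln (v i 0).
Definition divv (n : nat) (x y : 'cV[R]_n) : 'cV[R]_n := \col_i (x i 0 / y i 0).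

Definition positive_vec (n : nat) (x : 'cV[R]_n) : Prop := forall i, 0 < x i 0.

Definition crn_rhs (m c : nat) (Z : 'M[R]_(m, c)) (L : 'M[R]_c)
  (xs x : 'cV[R]_m) : 'cV[R]_m :=
  - (Z *m L *m Expv (Z^T *m Lnv (divv x xs))).

Definition is_equilibrium (m c : nat) (Z : 'M[R]_(m, c)) (L : 'M[R]_c)
  (xs x : 'cV[R]_m) : Prop :=
  positive_vec x /\ crn_rhs Z L xs x = 0.

Definition deficiency (m c r : nat) (Z : 'M[R]_(m, c)) (B : 'M[R]_(c, r)) : nat :=
  (\rank B - \rank (Z *m B))%N.

Definition schur (c1 c2 : nat) (L : 'M[R]_(c1 + c2)) : 'M[R]_c1 :=
  ulsubmx L - ursubmx L *m invmx (drsubmx L) *m dlsubmx L.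

End CRN.

(* Main.v *)
Require Import Defs.
From HB Require Import structures.
From mathcomp Require Import all_boot all_order all_algebra.
From mathcomp Require Import reals sequences exp.
From mathcomp Require Import zify.
Import Order.TTheory GRing.Theory Num.Theory.
Local Open Scope ring_scope.
Set Implicit Arguments. Unset Strict Implicit.

Section Aux.
Variable R : realType.

Lemma psd_ker (c r p : nat) (B : 'M[R]_(c, r)) (k : 'rV[R]_r) :
  (forall j, 0 < k 0 j) -> forall U : 'M[R]_(p, c),
  U *m wlaplacian B k = 0 -> U *m B = 0.
Proof.
move=> hk U hU.
have H : (U *m B) *m diag_mx k *m (U *m B)^T = 0.
  by rewrite trmx_mul !mulmxA -(mulmxA U) -(mulmxA U) -/(wlaplacian B k) hU mul0mx.
move: H; set C := U *m B => H.
apply/matrixP => i j; rewrite [RHS]mxE.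
have := congr1 (fun M : 'M[R]_p => M i i) H; rewrite mxE [in RHS]mxE.
under eq_bigr do rewrite mul_mx_diag mxE [in _ ^T _ _]mxE.
move=> hs.
have h0 : forall j, C i j * k 0 j * C i j = 0.
  move=> l; apply: (psumr_eq0P _ hs) => // l' _.
  rewrite mulrAC -expr2 mulr_ge0 ?sqr_ge0 //; exact: ltW.
move: (h0 j) => /eqP; rewrite mulrAC -expr2 mulf_eq0 (gt_eqF (hk j)) orbF sqrf_eq0.
by move/eqP.
Qed.

Lemma lap_sub (c r : nat) (B : 'M[R]_(c, r)) (k : 'rV[R]_r) :
  (forall j, 0 < k 0 j) -> (B^T <= wlaplacian B k)%MS.
Proof.
move=> hk.
have sLB : (wlaplacian B k <= B^T)%MS by rewrite /wlaplacian submxMl.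
have hker : (kermx (wlaplacian B k) <= kermx B)%MS.
  by rewrite sub_kermx; apply/eqP; apply: psd_ker => //; exact: mulmx_ker.
have := mxrankS hker; rewrite !mxrank_ker => hle.
have hL := rank_leq_row (wlaplacian B k).
have hB := rank_leq_row B.
have hr : (\rank B^T <= \rank (wlaplacian B k))%N.
  by rewrite mxrank_tr; lia.
have heq : (wlaplacian B k == B^T)%MS.
  rewrite -(mxrank_leqif_eq sLB).2; apply/eqP/anti_leq; rewrite hr andbT.
  exact: mxrankS.
by case/andP: heq.
Qed.

Lemma inj_def0 (m c r : nat) (A : 'M[R]_(m, c)) (C : 'M[R]_(c, r)) :
  (forall W : 'M[R]_(r, r), A *m C *m W = 0 -> C *m W = 0) ->
  deficiency A C = 0%N.
Proof.
move=> hinj; rewrite /deficiency; apply/eqP; rewrite subn_eq0.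
set K := kermx (A *m C)^T.
have hK : C *m K^T = 0.
  apply: hinj; apply: trmx_inj; rewrite trmx_mul trmx0 trmxK.
  exact: mulmx_ker.
have hsub : (K <= kermx C^T)%MS.
  by rewrite sub_kermx -[K]trmxK -trmx_mul hK trmx0.
have := mxrankS hsub; rewrite !mxrank_ker !mxrank_tr => hle.
have := rank_leq_col C; have := rank_leq_col (A *m C).
lia.
Qed.

Lemma def0_inj (m c r : nat) (A : 'M[R]_(m, c)) (C : 'M[R]_(c, r)) :
  deficiency A C = 0%N ->
  forall p (W : 'M[R]_(r, p)), A *m C *m W = 0 -> C *m W = 0.
Proof.
rewrite /deficiency => /eqP; rewrite subn_eq0 => hr p W hW.
have hsub : (kermx C^T <= kermx (A *m C)^T)%MS.
  by rewrite sub_kermx trmx_mul mulmxA mulmx_ker mul0mx.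
have heq : (kermx C^T == kermx (A *m C)^T)%MS.
  rewrite -(mxrank_leqif_eq hsub).2 !mxrank_ker !mxrank_tr.
  have := rank_leq_col C; have := mxrankM_maxr A C.
  move=> h1 h2; apply/eqP; congr (_ - _)%N; apply/anti_leq; by rewrite hr h1.
case/andP: heq => _ hs2.
have hW' : (W^T <= kermx (A *m C)^T)%MS.
  by rewrite sub_kermx -trmx_mul hW trmx0.
have := submx_trans hW' hs2; rewrite sub_kermx -trmx_mul => /eqP h.
by apply: trmx_inj; rewrite h trmx0.
Qed.

Lemma inc_sum (c r : nat) (B : 'M[R]_(c, r)) : is_incidence B ->
  forall j : 'I_r, exists s t : 'I_c,
    forall f : 'I_c -> R, \sum_i B i j * f i = f t - f s.
Proof.
move=> hB j; have [s [t [hst [Bs [Bt H0]]]]] := hB j.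
exists s, t => f.
rewrite (bigD1 s) //= (bigD1 t) /=; last by rewrite eq_sym.
rewrite big1; last by move=> i /andP [his hit]; rewrite H0 // mul0r.
by rewrite Bs Bt mulN1r mul1r addr0 addrC.
Qed.

Lemma exp_edge (a b : R) : (b - a) * (expR b - expR a) >= 0 /\
  ((b - a) * (expR b - expR a) = 0 -> expR b - expR a = 0).
Proof.
split.
  have [hab|hab] := leP a b.
    by rewrite mulr_ge0 // subr_ge0 // ler_expR.
  by rewrite -mulrNN mulr_ge0 // opprB subr_ge0 ?ler_expR; exact: ltW.
move/eqP; rewrite mulf_eq0 => /orP [|/eqP //].
by rewrite subr_eq0 => /eqP ->; rewrite subrr.
Qed.

Lemma lap_expv (c r : nat) (B : 'M[R]_(c, r)) (k : 'rV[R]_r) (u : 'cV[R]_c) :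
  is_incidence B -> (forall j, 0 < k 0 j) ->
  u^T *m wlaplacian B k *m Expv u = 0 -> wlaplacian B k *m Expv u = 0.
Proof.
move=> hB hk H.
suff hb : B^T *m Expv u = 0 by rewrite /wlaplacian -mulmxA hb mulmx0.
have H2 : (B^T *m u)^T *m diag_mx k *m (B^T *m Expv u) = 0.
  by rewrite trmx_mul trmxK -H /wlaplacian !mulmxA.
have := congr1 (fun M : 'M[R]_1 => M 0 0) H2; rewrite mxE [in RHS]mxE.
under eq_bigr do rewrite mul_mx_diag mxE [in _ ^T _ _]mxE.
move=> hs.
have hterm : forall j, (B^T *m u) j 0 * (B^T *m Expv u) j 0 >= 0 /\
   ((B^T *m u) j 0 * (B^T *m Expv u) j 0 = 0 -> (B^T *m Expv u) j 0 = 0).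
  move=> j; have [s [t hst]] := inc_sum hB j.
  rewrite !mxE.
  under eq_bigr do rewrite mxE.
  under [X in _ * X]eq_bigr do rewrite !mxE.
  rewrite (hst (fun i => u i 0)) (hst (fun i => expR (u i 0))).
  under eq_bigr do rewrite !mxE. rewrite (hst (fun i => expR (u i 0))).
  exact: exp_edge.
apply/matrixP => j i; rewrite (ord1 i) [RHS]mxE.
have h0 : forall j, (B^T *m u) j 0 * k 0 j * (B^T *m Expv u) j 0 = 0.
  move=> l; apply: (psumr_eq0P _ hs) => // l' _.
  rewrite mulrAC mulr_ge0 //; [exact: (hterm l').1 | exact: ltW].
apply: (hterm j).2.
move: (h0 j) => /eqP; rewrite mulrAC mulf_eq0 (gt_eqF (hk j)) orbF.
by move/eqP.
Qed.

Lemma schur_ker c1 c2 p (L : 'M[R]_(c1 + c2)) (y : 'M[R]_(c1 + c2, p)) :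
  drsubmx L \in unitmx -> L *m y = 0 -> schur L *m usubmx y = 0.
Proof.
move=> hU; rewrite -{1}[L]submxK -{1}[y]vsubmxK mul_block_col => /eqP.
rewrite col_mx_eq0 => /andP [h1 h2].
move: h2; rewrite addrC addr_eq0 => /eqP h2.
have hd : dsubmx y = - (invmx (drsubmx L) *m dlsubmx L *m usubmx y).
  by rewrite -(mulKmx hU (dsubmx y)) h2 mulmxN mulmxA.
rewrite /schur mulmxBl; apply/eqP; rewrite subr_eq0.
move: h1; rewrite addr_eq0 => /eqP ->.
by rewrite hd mulmxN opprK !mulmxA.
Qed.
End Aux.

Theorem proposition8 (R : realType) (m c1 c2 r : nat)
  (Z : 'M[R]_(m, c1 + c2)) (B : 'M[R]_(c1 + c2, r)) (kappa : 'rV[R]_r)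
  (xs : 'cV[R]_m) :
  is_complex_matrix Z ->
  is_incidence B ->
  (forall j, 0 < kappa 0 j) ->
  positive_vec xs ->
  drsubmx (wlaplacian B kappa) \in unitmx ->
  (forall x : 'cV[R]_m,
     is_equilibrium Z (wlaplacian B kappa) xs x ->
     is_equilibrium (lsubmx Z) (schur (wlaplacian B kappa)) xs x)
  /\
  (deficiency Z B = 0%N ->
   forall (rh : nat) (Bh : 'M[R]_(c1, rh)) (kh : 'rV[R]_rh),
     is_incidence Bh ->
     (forall j, 0 < kh 0 j) ->
     schur (wlaplacian B kappa) = wlaplacian Bh kh ->
     deficiency (lsubmx Z) Bh = 0%N).
Proof.
move=> hZ hB hk hxs hU; set L := wlaplacian B kappa; split.
  move=> x [hx hrhs]; split => //.
  set u := Z^T *m Lnv (divv x xs).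
  have hZL : Z *m L *m Expv u = 0.
    by move/eqP: hrhs; rewrite oppr_eq0 => /eqP.
  have hLy : L *m Expv u = 0.
    apply: lap_expv => //.
    by rewrite /u trmx_mul trmxK -(mulmxA _ Z L) -(mulmxA _ (Z *m L)) hZL mulmx0.
  have hE : Expv ((lsubmx Z)^T *m Lnv (divv x xs)) = usubmx (Expv u).
    by rewrite trmx_lsub mul_usub_mx; apply/matrixP => i j; rewrite (ord1 j) !mxE.
  rewrite /crn_rhs hE -mulmxA schur_ker // mulmx0 oppr0 //.
move=> hdef rh Bh kh hBh hkh hS.
apply: inj_def0 => W hW.
have [D hD] := submxP (lap_sub Bh hkh).
have hsym : (wlaplacian Bh kh)^T = wlaplacian Bh kh.
  by rewrite /wlaplacian !trmx_mul trmxK tr_diag_mx mulmxA.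
have hBh' : Bh = schur L *m D^T by rewrite -[Bh]trmxK hD trmx_mul hsym hS.
set V := D^T *m W.
have hBW : Bh *m W = schur L *m V by rewrite hBh' mulmxA.
set V' := col_mx V (- (invmx (drsubmx L) *m dlsubmx L *m V)).
have hLV : L *m V' = col_mx (schur L *m V) 0.
  by rewrite -{1}[L]submxK mul_block_col /schur mulmxBl !mulmxN !mulmxA mulmxV // mul1mx subrr.
have hBL : B *m (diag_mx kappa *m B^T *m V') = L *m V' by rewrite /L /wlaplacian !mulmxA.
have : Z *m B *m (diag_mx kappa *m B^T *m V') = 0.
  rewrite -mulmxA hBL hLV -[Z]hsubmxK mul_row_col mulmx0 addr0 -hBW mulmxA.
  exact: hW.
move/(def0_inj hdef) => hB0.
rewrite hBW; move: hB0; rewrite hBL hLV => /eqP; rewrite col_mx_eq0.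
by case/andP => /eqP.
Qed.
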